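(* Let $q$ be an odd prime power and $n\ge1$. Let $g(x)\in\mathbb{F}_{q^n}[x]$ be a polynomial such that $g(x)^q=-g(x)$ for every $x\in\mathbb{F}_{q^n}$, let $L(x)=\sum_i a_i x^{q^i}$ with all $a_i\in\mathbb{F}_q$ be a linearized polynomial over $\mathbb{F}_q$, and let $\beta\in\mathbb{F}_{q^n}$ satisfy $\beta^q=-\beta$. Then for every $\delta\in\mathbb{F}_{q^n}$, the polynomial $$f(x)=g(x^q+x+\delta)+\beta\,\mathrm{Tr}(x)+L(x)$$ permutes $\mathbb{F}_{q^n}$ if and only if $L(x)$ permutes $\mathbb{F}_{q^n}$.
   Context: $\mathrm{Tr}$ denotes the trace function from $\mathbb{F}_{q^n}$ to $\mathbb{F}_q$, $\mathrm{Tr}(x)=x+x^q+\cdots+x^{q^{n-1}}$. A polynomial permutes $\mathbb{F}_{q^n}$ if it induces a bijection of $\mathbb{F}_{q^n}$. *)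

(* Defs.v *)
From mathcomp Require Import all_boot all_order all_algebra all_field.
Set Implicit Arguments. Unset Strict Implicit. Unset Printing Implicit Defensive.
Import GRing.Theory.
Local Open Scope ring_scope.

Definition prime_power (q : nat) : Prop :=
  exists p k : nat, prime p /\ (0 < k)%N /\ q = (p ^ k)%N.

Definition trq (K : finFieldType) (q n : nat) (x : K) : K :=
  \sum_(i < n) x ^+ (q ^ i).

Definition linpoly (K : finFieldType) (q : nat) (a : seq K) (x : K) : K :=
  \sum_(i < size a) a`_i * x ^+ (q ^ i).

Definition permutes (K : finFieldType) (f : K -> K) : Prop := bijective f.

(* Main.v *)
Require Import Defs.
From mathcomp Require Import all_boot all_order all_algebra all_field.
From mathcomp Require Import ring.
Import GRing.Theory.
Local Open Scope ring_scope.

Section S.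
Variables (K : finFieldType) (q n : nat).
Hypotheses (hq : prime_power q) (hodd : odd q) (hn : (0 < n)%N) (hK : #|K| = (q ^ n)%N).

Lemma pcK : exists p k, [/\ prime p, (0 < k)%N, q = (p ^ k)%N & p \in [pchar K]].
Proof.
have [p [k [pp [k0 eq]]]] := hq.
exists p, k; split => //.
by apply: (@card_finPcharP K p (k * n)) => //; rewrite hK eq expnM.
Qed.

Lemma natq m : [pchar K].-nat (q ^ m)%N.
Proof.
have [p [k [pp k0 -> pc]]] := pcK.
by rewrite -expnM (eq_pnat _ (pcharf_eq pc)) pnatX pnat_id.
Qed.
Lemma two_nz : (2%:R : K) != 0.
Proof.
have [p [k [pp k0 eq pc]]] := pcK.
rewrite -(dvdn_pcharf pc). apply/negP => /(dvdn_leq (isT : (0 < 2)%N)).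
move=> ple2; have p2 : p = 2%N.
  by have := prime_gt1 pp; case: p {pp pc eq} ple2 => [|[|[|]]].
by move: hodd; rewrite eq p2; case: k k0 {eq} => // k _; rewrite expnS oddM.
Qed.

Lemma natq1 : [pchar K].-nat q.
Proof. by have := natq 1; rewrite expn1. Qed.

Lemma q_gt0 : (0 < q)%N.
Proof. by case: q hodd. Qed.

Section Add.
Variables (e : nat) (he : [pchar K].-nat e) (e0 : (0 < e)%N).
Lemma frD (x y : K) : (x + y) ^+ e = x ^+ e + y ^+ e.
Proof. exact: exprDn_pchar. Qed.
Lemma fr0 : (0 : K) ^+ e = 0.
Proof. by rewrite expr0n; case: e e0. Qed.
Lemma frN (x : K) : (- x) ^+ e = - x ^+ e.
Proof.
apply/eqP; rewrite -subr_eq0 opprK -frD addNr fr0 //.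
Qed.
Lemma frB (x y : K) : (x - y) ^+ e = x ^+ e - y ^+ e.
Proof. by rewrite frD frN. Qed.
Lemma fr_sum (I : Type) (r : seq I) (F : I -> K) :
  (\sum_(i <- r) F i) ^+ e = \sum_(i <- r) F i ^+ e.
Proof.
elim: r => [|i r IH]; first by rewrite !big_nil fr0.
by rewrite !big_cons frD IH.
Qed.
End Add.

Lemma qm_gt0 m : (0 < q ^ m)%N.
Proof. by rewrite expn_gt0 q_gt0. Qed.

Lemma expq_card (x : K) : x ^+ (q ^ n) = x.
Proof. by rewrite -hK expf_card. Qed.

Lemma trD (x y : K) : trq q n (x + y) = trq q n x + trq q n y.
Proof. by rewrite /trq -big_split; apply: eq_bigr => i _; rewrite frD ?natq ?qm_gt0. Qed.
Lemma trB (x y : K) : trq q n (x - y) = trq q n x - trq q n y.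
Proof. by rewrite /trq -sumrB; apply: eq_bigr => i _; rewrite frB ?natq ?qm_gt0. Qed.
Lemma tr0 : trq q n (0 : K) = 0.
Proof. by rewrite /trq big1 // => i _; rewrite fr0 ?qm_gt0. Qed.

Lemma tr_frob (x : K) : trq q n x ^+ q = trq q n x.
Proof.
rewrite /trq fr_sum ?natq1 ?q_gt0 //.
have -> : \sum_(i < n) (x ^+ (q ^ i)) ^+ q = \sum_(i < n) x ^+ (q ^ i.+1).
  by apply: eq_bigr => i _; rewrite -exprM expnSr.
have := expq_card x; case: n hn => // n' _ ec.
rewrite big_ord_recr big_ord_recl /= ec addrC expn0 expr1; congr (_ + _).
Qed.

Lemma tr_arg (x : K) : trq q n (x ^+ q) = trq q n x ^+ q.
Proof.
rewrite /trq fr_sum ?natq1 ?q_gt0 //.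
by apply: eq_bigr => i _; rewrite -!exprM mulnC.
Qed.

Lemma tr_ker (u : K) : u ^+ q + u = 0 -> trq q n u = 0.
Proof.
move=> hu; have uq : u ^+ q = - u by apply/eqP; rewrite -subr_eq0 opprK hu.
have : trq q n u + trq q n u = 0.
  by rewrite -{1}tr_frob -tr_arg uq -trD addNr tr0.
rewrite -mulr2n -mulr_natr => /eqP; rewrite mulf_eq0 (negbTE two_nz) orbF.
by move/eqP.
Qed.

Section Lin.
Variables (a : seq K) (ha : forall i, (i < size a)%N -> a`_i ^+ q = a`_i).
Lemma linD (x y : K) : linpoly q a (x + y) = linpoly q a x + linpoly q a y.
Proof. by rewrite /linpoly -big_split; apply: eq_bigr => i _; rewrite frD ?natq ?qm_gt0 // mulrDr. Qed.
Lemma linB (x y : K) : linpoly q a (x - y) = linpoly q a x - linpoly q a y.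
Proof. by rewrite /linpoly -sumrB; apply: eq_bigr => i _; rewrite frB ?natq ?qm_gt0 // mulrBr. Qed.
Lemma lin0 : linpoly q a (0 : K) = 0.
Proof. by rewrite /linpoly big1 // => i _; rewrite fr0 ?qm_gt0 // mulr0. Qed.
Lemma lin_frob (x : K) : linpoly q a x ^+ q = linpoly q a (x ^+ q).
Proof.
rewrite /linpoly fr_sum ?natq1 ?q_gt0 //.
apply: eq_bigr => i _; rewrite exprMn ha // -!exprM mulnC //.
Qed.
End Lin.

Lemma main (g : {poly K}) (hg : forall x : K, g.[x] ^+ q = - g.[x])
  (a : seq K) (ha : forall i, (i < size a)%N -> a`_i ^+ q = a`_i)
  (beta : K) (hbeta : beta ^+ q = - beta) (delta : K) :
  permutes (fun x : K => g.[x ^+ q + x + delta] + beta * trq q n x + linpoly q a x)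
  <-> permutes (linpoly q a).
Proof.
set L := linpoly q a.
set psi := fun x : K => x ^+ q + x.
set f := fun x : K => _.
have psiB x y : psi (x - y) = psi x - psi y.
  by rewrite /psi frB ?natq1 ?q_gt0 // opprD addrACA.
have psi0 : psi 0 = 0 by rewrite /psi fr0 ?q_gt0 // addr0.
have psiL x : psi (L x) = L (psi x) by rewrite /psi /L lin_frob // linD.
have psif x : psi (f x) = L (psi x).
  rewrite /psi /f !frD ?natq1 ?q_gt0 // hg exprMn hbeta tr_frob //.
  rewrite (lin_frob _ ha) /L linD; ring.
have f0 : f 0 = g.[delta].
  by rewrite /f fr0 ?q_gt0 // tr0 /L lin0 mulr0 !addr0 add0r.
have fker v : psi v = 0 -> f v = g.[delta] + L v.
  by move=> hv; rewrite /f [v ^+ q + v]hv add0r tr_ker // mulr0 addr0.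
split.
- move=> fb; have finj := bij_inj fb.
  have S1 v : psi v = 0 -> L v = 0 -> v = 0.
    move=> hv lv; apply: finj; by rewrite fker // f0 lv addr0.
  pose S := [set psi x | x : K].
  have sub : S \subset L @: S.
    apply/subsetP => y /imsetP [x _ ->].
    have [fi fK Kf] := fb.
    rewrite -(Kf x) psif; apply: imset_f; exact: imset_f.
  have Sinj : {in S &, injective L}.
    apply/imset_injP; rewrite eqn_leq leq_imset_card /=.
    exact: subset_leq_card.
  have kerL u : L u = 0 -> u = 0.
    move=> lu; apply: S1 => //.
    have : L (psi u) = L (psi 0) by rewrite -psiL lu psi0 /L lin0 // psi0.
    move/Sinj => -> //.
    1,2: by apply/imsetP; eexists.
  apply: injF_bij => x y lxy; apply/eqP; rewrite -subr_eq0; apply/eqP.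
  by apply: kerL; rewrite /L linB -/L lxy subrr.
- move=> Lb; have Linj := bij_inj Lb.
  apply: injF_bij => x y fxy.
  have pxy : psi x = psi y by apply: Linj; rewrite -!psif fxy.
  have := fxy; rewrite /f.
  rewrite -/(psi x) -/(psi y) pxy -!addrA => /addrI.
  have ht : trq q n x = trq q n y.
    apply/eqP; rewrite -subr_eq0 -trB; apply/eqP; apply: tr_ker.
    by rewrite -/(psi (x - y)) psiB pxy subrr.
  by rewrite ht => /addrI /Linj.
Qed.
End S.

Theorem mainTheorem7 (K : finFieldType) (q n : nat)
  (hq : prime_power q) (hodd : odd q) (hn : (0 < n)%N) (hK : #|K| = (q ^ n)%N)
  (g : {poly K}) (hg : forall x : K, g.[x] ^+ q = - g.[x])
  (a : seq K) (ha : forall i, (i < size a)%N -> a`_i ^+ q = a`_i)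
  (beta : K) (hbeta : beta ^+ q = - beta) (delta : K) :
  permutes (fun x : K => g.[x ^+ q + x + delta] + beta * trq q n x + linpoly q a x)
  <-> permutes (linpoly q a).
Proof. exact: (@main K q n hq hodd hn hK g hg a ha beta hbeta delta). Qed.
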